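(* Let $\Gamma$ be a group acting on a set $X$ with only finitely many orbits, and let $n \in \mathbb{N}$. If for each orbit the stabilizer of a point of that orbit is $n$-boundedly acyclic, then $\operatorname{H}^k_b(\Gamma;\ell^\infty(X)) \cong 0$ for all $k \in \{1,\dots,n\}$.
   Context: $\ell^\infty(X)$ is the Banach $\Gamma$-module of bounded real functions on $X$ with the sup norm and action $(g\cdot f)(x) = f(g^{-1}x)$; $\operatorname{H}^*_b(\Gamma;V)$ is the cohomology of $\ell^\infty(\Gamma^{*+1},V)^\Gamma$ with homogeneous coboundary. A group is $n$-boundedly acyclic if its bounded cohomology with trivial real coefficients vanishes in degrees $1,\dots,n$. *)

(* Defs.v *)
From mathcomp Require Import all_boot all_order all_algebra.
From mathcomp Require Import Rstruct.
From Stdlib Require Import Rdefinitions.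
Local Notation R := Rdefinitions.R.

Set Implicit Arguments. Unset Strict Implicit. Unset Printing Implicit Defensive.
Import Order.TTheory GRing.Theory Num.Theory.
Local Open Scope ring_scope.

(* A (possibly infinite) group is given by a carrier G with operations
   mul, inv; a subgroup is given by a predicate S : G -> Prop.
   Coefficients: the Banach module l^oo(Y) of bounded real functions on a
   Gamma-set Y (action act), with (g.f)(y) = f(g^-1 y).  Trivial real
   coefficients are the case Y = unit.
   A k-cochain of the homogeneous complex l^oo(S^{k+1}, l^oo(Y))^S is a map
   F : S^{k+1} -> (Y -> R); we represent S^{k+1} by the tuples
   g : 'I_k.+1 -> G with all entries in S. *)

Section BoundedCohomology.
Variables (G : Type) (mul : G -> G -> G) (inv : G -> G) (S : G -> Prop).
Variables (Y : Type) (act : G -> Y -> Y).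

Definition cochain (k : nat) := ('I_k.+1 -> G) -> Y -> R.

Definition in_S (k : nat) (g : 'I_k.+1 -> G) := forall i, S (g i).

Definition bdd_cochain k (F : cochain k) :=
  exists C : R, forall g, in_S g -> forall y, `|F g y| <= C.

Definition inv_cochain k (F : cochain k) :=
  forall h g, S h -> in_S g -> forall y,
    F (fun i => mul h (g i)) y = F g (act (inv h) y).

Definition cochain_eq k (F1 F2 : cochain k) :=
  forall g, in_S g -> forall y, F1 g y = F2 g y.

Definition coboundary k (F : cochain k) : cochain k.+1 :=
  fun g y => \sum_(i < k.+2) (-1) ^+ i * F (fun j => g (lift i j)) y.

Definition zero_cochain k : cochain k := fun _ _ => 0.

Definition Hb_vanishes (d : nat) : Prop :=
  match d with
  | 0 => forall F : cochain 0, bdd_cochain F -> inv_cochain F ->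
           cochain_eq (coboundary F) (@zero_cochain 1) ->
           cochain_eq F (@zero_cochain 0)
  | d'.+1 => forall F : cochain d'.+1, bdd_cochain F -> inv_cochain F ->
           cochain_eq (coboundary F) (@zero_cochain d'.+2) ->
           exists B : cochain d', [/\ bdd_cochain B, inv_cochain B &
             cochain_eq (coboundary B) F]
  end.

End BoundedCohomology.

Definition n_boundedly_acyclic (G : Type) (mul : G -> G -> G) (inv : G -> G)
  (S : G -> Prop) (n : nat) : Prop :=
  forall k : nat, (leq 1 k && leq k n) ->
    Hb_vanishes mul inv S (fun (_ : G) (y : unit) => y) k.

Definition whole (G : Type) : G -> Prop := fun _ => True.

Definition stabilizer (G X : Type) (act : G -> X -> X) (x : X) : G -> Prop :=
  fun g => act g x = x.

(* Main.v *)
From Stdlib Require Import FunctionalExtensionality PropExtensionality ClassicalEpsilon.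
Require Import Defs.
From mathcomp Require Import all_boot all_order all_algebra zify lra.
From mathcomp Require Import Rstruct.
Local Notation R := Rdefinitions.R.
Set Implicit Arguments. Unset Strict Implicit. Unset Printing Implicit Defensive.
Import Order.TTheory GRing.Theory Num.Theory.
Local Open Scope ring_scope.

Section Homotopy.
Variables (G : Type) (p : G -> G) (phi : (nat -> G) -> R) (T : nat -> G).

Definition Pj (j : nat) (T : nat -> G) : nat -> G :=
  fun l => if (l <= j)%N then p (T l) else T l.-1.
Definition Qj (j : nat) (T : nat -> G) : nat -> G :=
  fun l => if (l < j)%N then p (T l) else T l.
Definition fc (i : nat) (T : nat -> G) : nat -> G := fun l => T (bump i l).

Definition aa (i j : nat) : R := (-1) ^+ (i + j) * phi (Pj j (fc i T)).
Definition cc (j i : nat) : R := (-1) ^+ (i + j) * phi (fc i (Pj j T)).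
Definition S1 m := \sum_(i < m.+1) \sum_(j < m) aa i j.
Definition S2 m := \sum_(j < m.+1) \sum_(i < m.+2) cc j i.

Lemma bumpE i l : bump i l = if (i <= l)%N then l.+1 else l.
Proof. by rewrite /bump; case: leqP. Qed.

Ltac crush := repeat (match goal with
 | |- context [if ?b then _ else _] =>
   lazymatch b with context [if _ then _ else _] => fail | _ => case: (boolP b) => ? /= end
 end); first [ reflexivity | exfalso; lia | congr (p (T _)); lia | congr (T _); lia ].

Lemma id1 j : fc j (Pj j T) = Qj j T.
Proof. apply: functional_extensionality => l; rewrite /fc /Pj /Qj !bumpE; crush. Qed.

Lemma id2 j : fc j.+1 (Pj j T) = Qj j.+1 T.
Proof. apply: functional_extensionality => l; rewrite /fc /Pj /Qj !bumpE; crush. Qed.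

Lemma id3 m i : (i <= m)%N -> fc i (Pj m.+1 T) = Pj m (fc i T).
Proof. move=> him; apply: functional_extensionality => l; rewrite /fc /Pj !bumpE; crush. Qed.

Lemma id4 m j : (j <= m)%N -> fc m.+2 (Pj j T) = Pj j (fc m.+1 T).
Proof. move=> hjm; apply: functional_extensionality => l; rewrite /fc /Pj !bumpE; crush. Qed.

Lemma homotopy m : S1 m + S2 m = phi T - phi (Qj m.+1 T).
Proof.
elim: m => [|m IH].
  rewrite /S1 /S2 big_ord1 big_ord0 add0r big_ord1 big_ord_recr /= big_ord1.
  rewrite /cc /= id1 id2 expr0 mul1r expr1 mulN1r.
  have -> : Qj 0 T = T by apply: functional_extensionality => l; rewrite /Qj.
  done.
have E1 : S1 m.+1 = S1 m + \sum_(i < m.+1) aa i m + \sum_(j < m.+1) aa m.+1 j.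
  rewrite /S1 big_ord_recr /=; congr (_ + _).
  rewrite -big_split /=; apply: eq_bigr => i _; by rewrite big_ord_recr.
have E2 : S2 m.+1 = S2 m + \sum_(j < m.+1) cc j m.+2 + (\sum_(i < m.+1) cc m.+1 i + cc m.+1 m.+1 + cc m.+1 m.+2).
  rewrite /S2 big_ord_recr /=; congr (_ + _).
    rewrite -big_split /=; apply: eq_bigr => i _; by rewrite big_ord_recr.
  by rewrite big_ord_recr /= big_ord_recr /=.
have C1 : \sum_(j < m.+1) cc j m.+2 = - \sum_(j < m.+1) aa m.+1 j.
  rewrite -sumrN; apply: eq_bigr => j _.
  rewrite /cc /aa id4; last by rewrite -ltnS.
  rewrite -mulNr; congr (_ * _).
  by rewrite addSn exprS mulN1r.
have C2 : \sum_(i < m.+1) cc m.+1 i = - \sum_(i < m.+1) aa i m.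
  rewrite -sumrN; apply: eq_bigr => i _.
  rewrite /cc /aa id3; last by rewrite -ltnS.
  rewrite -mulNr; congr (_ * _).
  by rewrite addnS exprS mulN1r.
have C3 : cc m.+1 m.+1 = phi (Qj m.+1 T).
  by rewrite /cc id1 addnn -signr_odd odd_double expr0 mul1r.
have C4 : cc m.+1 m.+2 = - phi (Qj m.+2 T).
  by rewrite /cc id2 addSn addnn exprS -signr_odd odd_double expr0 mulr1 mulN1r.
rewrite E1 E2 C1 C2 C3 C4.
have : S1 m + S2 m = phi T - phi (Qj m.+1 T) := IH.
move=> IH'.
rewrite -[LHS]/(_) ; lra.
Qed.
End Homotopy.

Section Group.
Variables (G : Type) (mul : G -> G -> G) (one : G) (inv : G -> G).
Hypothesis mulA : forall a b c, mul a (mul b c) = mul (mul a b) c.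
Hypothesis mul1g : forall a, mul one a = a.
Hypothesis mulVg : forall a, mul (inv a) a = one.

Lemma mulKg a b : mul (inv a) (mul a b) = b.
Proof. by rewrite mulA mulVg mul1g. Qed.

Lemma mulgV a : mul a (inv a) = one.
Proof.
transitivity (mul (mul (inv (inv a)) (inv a)) (mul a (inv a))).
  by rewrite mulVg mul1g.
by rewrite -mulA (mulA (inv a) a) mulVg mul1g mulVg.
Qed.

Lemma mulg1 a : mul a one = a.
Proof. by rewrite -(mulVg a) mulA mulgV mul1g. Qed.

Lemma mulKVg a b : mul a (mul (inv a) b) = b.
Proof. by rewrite mulA mulgV mul1g. Qed.

Lemma inv_uniq x y : mul x y = one -> x = inv y.
Proof. by move=> h; rewrite -[x]mulg1 -(mulgV y) mulA h mul1g. Qed.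

Lemma invK a : inv (inv a) = a.
Proof. by symmetry; apply: inv_uniq; rewrite mulgV. Qed.

Lemma invM a b : inv (mul a b) = mul (inv b) (inv a).
Proof. by symmetry; apply: inv_uniq; rewrite -mulA mulKg mulVg. Qed.

Variables (X : Type) (act : G -> X -> X).
Hypothesis act1 : forall x, act one x = x.
Hypothesis actM : forall g h x, act (mul g h) x = act g (act h x).

Lemma actK a x : act (inv a) (act a x) = x.
Proof. by rewrite -actM mulVg act1. Qed.

Lemma actKV a x : act a (act (inv a) x) = x.
Proof. by rewrite -actM mulgV act1. Qed.

Lemma act_inv_fix h z : act h z = z -> act (inv h) z = z.
Proof. by move=> e; rewrite -{1}e actK. Qed.

Section Key.
Variable z : X.

Definition asel (w : X) : G := epsilon (inhabits one) (fun a => act a z = w).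
Definition pp (g : G) : G := mul g (asel (act (inv g) z)).

Lemma asel_spec g : act (asel (act g z)) z = act g z.
Proof. by apply: (epsilon_spec (inhabits one) (fun a => act a z = act g z)); exists g. Qed.

Lemma pp_in g : act (pp g) z = z.
Proof. by rewrite /pp actM asel_spec actKV. Qed.

Lemma pp_eq h g : act h z = z -> pp (mul h g) = mul h (pp g).
Proof.
move=> e; by rewrite /pp invM actM (act_inv_fix e) mulA.
Qed.


Section KeyLemma.
Variable d : nat.
Variable F : cochain G X d.+1.
Hypothesis hb : bdd_cochain (@whole G) F.
Hypothesis hinv : inv_cochain mul inv (@whole G) act F.
Hypothesis hcoc : cochain_eq (@whole G) (coboundary F) (@zero_cochain G X d.+2).

Definition phi (T : nat -> G) : R := F (fun i : 'I_d.+2 => T i) z.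

Lemma phi_inv h T : act h z = z -> phi (fun l => mul h (T l)) = phi T.
Proof.
move=> e; rewrite /phi (hinv (h := h) (g := fun i : 'I_d.+2 => T i)) //.
by rewrite act_inv_fix.
Qed.

Lemma phi_coc T : \sum_(i < d.+3) (-1) ^+ i * phi (fc i T) = 0.
Proof. exact: (hcoc (g := fun i : 'I_d.+3 => T i)). Qed.

Lemma phi_bdd : exists C, forall T, `|phi T| <= C.
Proof. case: hb => C hC; exists C => T; exact: hC. Qed.

Lemma key_lemma :
  Hb_vanishes mul inv (stabilizer act z) (fun (_ : G) (y : unit) => y) d.+1 ->
  exists c : ('I_d.+1 -> G) -> R,
   [/\ exists C, forall u, `|c u| <= C,
       forall h u, act h z = z -> c (fun j => mul h (u j)) = c u &
       forall t : 'I_d.+2 -> G,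
         \sum_(i < d.+2) (-1) ^+ i * c (fun j => t (lift i j)) = F t z].
Proof.
move=> hac.
have [b [[Cb hCb] binv bcob]] :
  exists b : cochain G unit d, [/\ bdd_cochain (stabilizer act z) b,
     inv_cochain mul inv (stabilizer act z) (fun (_ : G) (y : unit) => y) b &
     cochain_eq (stabilizer act z) (coboundary b) (fun t (_ : unit) => F t z)].
  apply: hac.
  - by case: hb => C hC; exists C => g _ y; exact: hC.
  - move=> h g hh hg y /=; rewrite (hinv (h := h) (g := g)) //.
    by rewrite act_inv_fix.
  - by move=> g _ y; exact: (hcoc (g := g)).
pose beta (T : nat -> G) := b (fun i : 'I_d.+1 => pp (T i)) tt.
pose sphi (T : nat -> G) := \sum_(j < d.+1) (-1) ^+ j * phi (Pj (pp) j T).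
pose c' T := beta T + sphi T.
pose ext (u : 'I_d.+1 -> G) : nat -> G := fun l => u (inord l).
have [C hC] := phi_bdd.
exists (fun u => c' (ext u)); split.
- exists (Cb + C *+ d.+1) => u.
  rewrite /c' (le_trans (ler_normD _ _)) // lerD //.
    by apply: hCb => i; exact: pp_in.
  rewrite /sphi (le_trans (ler_norm_sum _ _ _)) //.
  rewrite -[d.+1 in X in _ <= X](card_ord d.+1) -sumr_const.
  apply: ler_sum => j _; by rewrite normrM normrX normrN1 expr1n mul1r.
- move=> h u e; rewrite /c'; congr (_ + _).
    rewrite /beta /ext.
    have -> : (fun i : 'I_d.+1 => pp (mul h (u (inord i)))) =
              (fun i => mul h (pp (u (inord i)))).
      by apply: functional_extensionality => i; rewrite pp_eq.
    exact: (binv h (fun i : 'I_d.+1 => pp (u (inord i))) e (fun i => pp_in _)).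
  rewrite /sphi; apply: eq_bigr => j _; congr (_ * _).
  rewrite -(phi_inv (Pj pp j (ext u)) e); congr phi.
  apply: functional_extensionality => l; rewrite /Pj /ext.
  by case: ifP => _ //; rewrite pp_eq.
- move=> t.
  pose Te := fun l => t (inord l).
  have loc : forall T1 T2 : nat -> G, (forall l, (l < d.+1)%N -> T1 l = T2 l) -> c' T1 = c' T2.
    move=> T1 T2 hT; rewrite /c' /beta /sphi; congr (_ + _).
      congr b; apply: functional_extensionality => i; by rewrite hT.
    apply: eq_bigr => j _; congr (_ * _); rewrite /phi; congr F.
    apply: functional_extensionality => i; rewrite /Pj.
    case: ifP => hij; first by rewrite hT //; apply: leq_ltn_trans hij _.
    rewrite hT //; have := ltn_ord i; have := ltn_ord j; move/negbT: hij; lia.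
  have E1 : forall i : 'I_d.+2, c' (ext (fun j => t (lift i j))) = c' (fc i Te).
    move=> i; apply: loc => l hl; rewrite /ext /fc /Te; congr t.
    apply: val_inj => /=; rewrite /bump inordK // inordK //.
    rewrite /bump; case: (i <= l)%N; lia.
  under eq_bigr => i _ do rewrite E1.
  rewrite /c' /=.
  under eq_bigr => i _ do rewrite mulrDr.
  rewrite big_split /=.
  have B1 : \sum_(i < d.+2) (-1) ^+ i * beta (fc i Te) = phi (fun l => pp (Te l)).
    exact: (bcob (fun l : 'I_d.+2 => pp (Te l)) (fun l => pp_in _) tt).
  have B2 : \sum_(i < d.+2) (-1) ^+ i * sphi (fc i Te) = S1 (pp) phi Te d.+1.
    rewrite /S1; apply: eq_bigr => i _; rewrite /sphi big_distrr /=.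
    apply: eq_bigr => j _; by rewrite /aa exprD mulrA.
  have B3 : S2 (pp) phi Te d.+1 = 0.
    rewrite /S2 big1 // => j _.
    transitivity ((-1) ^+ j * \sum_(i < d.+3) (-1) ^+ i * phi (fc i (Pj (pp) j Te))).
      rewrite big_distrr /=; apply: eq_bigr => i _; by rewrite /cc exprD mulrA (mulrC ((-1) ^+ j)).
    by rewrite phi_coc mulr0.
  have H := homotopy (pp) phi Te d.+1.
  have Q : phi (Qj (pp) d.+2 Te) = phi (fun l => pp (Te l)).
    rewrite /phi; congr F; apply: functional_extensionality => i; by rewrite /Qj ltn_ord.
  have P0 : phi Te = F t z.
    rewrite /phi /Te; congr F; apply: functional_extensionality => i; by rewrite inord_val.
  rewrite B1 B2; move: H; rewrite B3 addr0 Q P0 => ->; lra.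
Qed.
End KeyLemma.

End Key.
End Group.

Theorem lemma6p10 (G : Type) (mul : G -> G -> G) (one : G) (inv : G -> G)
  (mulA : forall a b c, mul a (mul b c) = mul (mul a b) c)
  (mul1g : forall a, mul one a = a)
  (mulVg : forall a, mul (inv a) a = one)
  (X : Type) (act : G -> X -> X)
  (act1 : forall x, act one x = x)
  (actM : forall g h x, act (mul g h) x = act g (act h x))
  (finite_orbits : exists (m : nat) (r : 'I_m -> X),
      forall x, exists (i : 'I_m) (g : G), act g (r i) = x)
  (n : nat)
  (stab_acyclic : forall x : X, exists g : G,
      n_boundedly_acyclic mul inv (stabilizer act (act g x)) n) :
  forall k : nat, (leq 1 k && leq k n) -> Hb_vanishes mul inv (@whole G) act k.
Proof.
move=> k /andP [hk1 hkn]; case: k hk1 hkn => [//|d] _ hdn.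
move=> F hb hinv hcoc.
case: finite_orbits => m [r hr].
pose gsel x := epsilon (inhabits one)
  (fun g => n_boundedly_acyclic mul inv (stabilizer act (act g x)) n).
pose zrep x := act (gsel x) x.
have acz : forall x : X, Hb_vanishes mul inv (stabilizer act (zrep x)) (fun (_ : G) (y : unit) => y) d.+1.
  move=> x; have := epsilon_spec (inhabits one) _ (stab_acyclic x).
  move=> /(_ d.+1); rewrite hdn => /(_ isT) H; exact: H.
pose Pz y z := (exists i : 'I_m, z = zrep (r i)) /\ exists g, act g z = y.
have Pz_ex : forall y, exists z, Pz y z.
  move=> y; case: (hr y) => i [g e]; exists (zrep (r i)); split; first by exists i.
  exists (mul g (inv (gsel (r i)))).
  by rewrite /zrep actM -(actM (inv _)) mulVg act1.
pose zz y := epsilon (inhabits y) (Pz y).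
have zz_spec : forall y, Pz y (zz y).
  move=> y; exact: (epsilon_spec _ _ (Pz_ex y)).
have zz_inv : forall h y, zz (act h y) = zz y.
  move=> h y; rewrite /zz.
  have -> : Pz (act h y) = Pz y.
    apply: functional_extensionality => w; apply: propositional_extensionality.
    split => -[hi [g e]]; split=> //.
      by exists (mul (inv h) g); rewrite actM e -actM mulVg act1.
    by exists (mul h g); rewrite actM e.
  exact: epsilon_inh_irrelevance (Pz_ex y).
pose Spec z (c : ('I_d.+1 -> G) -> R) :=
  [/\ exists C, forall u, `|c u| <= C,
       forall h u, act h z = z -> c (fun j => mul h (u j)) = c u &
       forall t : 'I_d.+2 -> G,
         \sum_(i < d.+2) (-1) ^+ i * c (fun j => t (lift i j)) = F t z].
pose csel z := epsilon (inhabits (fun _ : 'I_d.+1 -> G => 0 : R)) (Spec z).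
have cspec : forall x, Spec (zrep x) (csel (zrep x)).
  move=> x; apply: epsilon_spec.
  exact: (key_lemma mulA mul1g mulVg act1 actM hb hinv hcoc (acz x)).
have zspec : forall y, Spec (zz y) (csel (zz y)).
  by move=> y; case: (zz_spec y) => [[i ->] _]; exact: cspec.
pose Cf (i : 'I_m) := epsilon (inhabits (0 : R))
  (fun C => forall u, `|csel (zrep (r i)) u| <= C).
have Cf_spec : forall i u, `|csel (zrep (r i)) u| <= Cf i.
  move=> i; apply: (epsilon_spec _ (fun C => forall u, `|csel (zrep (r i)) u| <= C)).
  by case: (cspec (r i)).
pose asel y := epsilon (inhabits one) (fun a => act a (zz y) = y).
have asel_spec : forall y, act (asel y) (zz y) = y.
  move=> y; apply: (epsilon_spec _ (fun a => act a (zz y) = y)).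
  by case: (zz_spec y) => _ [g e]; exists g.
exists (fun t y => csel (zz y) (fun j => mul (inv (asel y)) (t j))); split.
- exists (\sum_(i < m) `|Cf i|) => t _ y.
  case: (zz_spec y) => [[i ei] _]; rewrite ei.
  apply: le_trans (Cf_spec i _) _.
  apply: le_trans (ler_norm (Cf i)) _.
  rewrite (bigD1 i) //= lerDl; apply: sumr_ge0 => j _; exact: normr_ge0.
- move=> h t _ _ y /=.
  set y' := act (inv h) y.
  have ez : zz y' = zz y by exact: zz_inv.
  have e' := asel_spec y'; rewrite ez in e'.
  rewrite ez.
  case: (zspec y) => _ hI _.
  pose s := mul (inv (asel y')) (mul (inv h) (asel y)).
  have es : act s (zz y) = zz y.
    rewrite /s !actM asel_spec -/y'.
    by have := congr1 (act (inv (asel y'))) e'; rewrite -actM mulVg act1 => <-.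
  rewrite -(hI s (fun j => mul (inv (asel y)) (mul h (t j))) es).
  congr (csel _); apply: functional_extensionality => j.
  by rewrite /s -!mulA (mulKVg mulA mul1g mulVg) (mulKg mulA mul1g mulVg).
- move=> t _ y /=; rewrite /coboundary.
  case: (zspec y) => _ _ hc.
  have := hc (fun l => mul (inv (asel y)) (t l)); rewrite /= => ->.
  rewrite (hinv (inv (asel y)) t I (fun _ => I) (zz y)).
  by rewrite (invK mulA mul1g mulVg) asel_spec.
Qed.
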